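(* Let $\mathbf{E}$ be the category whose objects are algebras and whose morphisms $A\to A'$ are the algebra epimorphisms (surjective unital algebra homomorphisms) $k:A\to A'$, with ordinary composition. Let $\mathbf{P}$ be the category whose objects are, for some $n\ge1$, nonzero finite-dimensional real vector spaces $P$ of real symmetric $n\times n$ matrices, and in which a morphism from $P$ ($n\times n$ matrices) to $P'$ ($n'\times n'$ matrices) is given by a real $n\times n'$ matrix $w$ with $ww^T$ nonsingular and $w^TPw\subseteq P'$; this morphism is denoted $w^T[\cdot]w$ and acts by $L\mapsto w^TLw$, and composition is composition of these maps (the composite of $w^T[\cdot]w:P\to P'$ followed by $w'^T[\cdot]w':P'\to P''$ is $(ww')^T[\cdot](ww')$). Define $F$ on objects by $F[A]=\mathfrak{u}_A$ and, for an epimorphism $k:A_1\to A_2$ (identified with its matrix), $F(k)=k^T[\cdot]k:\mathfrak{u}_{A_2}\to\mathfrak{u}_{A_1}$. Then for every epimorphism $k$ one has $k^T\mathfrak{u}_{A_2}k\subseteq\mathfrak{u}_{A_1}$ and $kk^T$ nonsingular, so $F(k)$ is a morphism of $\mathbf{P}$, and $F:\mathbf{E}\to\mathbf{P}$ is a contravariant functor.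
   Context: An ''algebra'' is a real finite-dimensional unital associative algebra with underlying vector space $\mathbb{R}^n$, standard basis, elements column vectors $s=(x_1,\dots,x_n)^T$ and $\mathbf{d}s=(dx_1,\dots,dx_n)^T$. An uncurling metric of $A$ is a real symmetric $n\times n$ matrix $L$ with $d\big((s^{-1})^TL\,\mathbf{d}s\big)=0$ on an open ball centered at $\mathbf{1}_A$ consisting only of units; the anti-rotor $\mathfrak{u}_A$ is the vector space of uncurling metrics (it is nonzero for every algebra). *)

(* Defs.v *)
From HB Require Import structures.
From mathcomp Require Import all_boot all_order all_algebra.
From mathcomp Require Import all_classical all_reals all_analysis.
From mathcomp Require Import Rstruct Rstruct_topology.
Set Implicit Arguments. Unset Strict Implicit. Unset Printing Implicit Defensive.
Import Order.TTheory GRing.Theory Num.Theory.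
Import numFieldNormedType.Exports.
Local Open Scope classical_set_scope.
Local Open Scope ring_scope.

Notation RR := Rdefinitions.R.

(* A real finite-dimensional unital associative algebra on R^n
   (elements are column vectors, standard basis). *)
Record algebra (n : nat) := Algebra {
  amul : 'cV[RR]_n -> 'cV[RR]_n -> 'cV[RR]_n;
  aone : 'cV[RR]_n;
  amulDl : forall (a : RR) x y z, amul (a *: x + y) z = a *: amul x z + amul y z;
  amulDr : forall (a : RR) x y z, amul z (a *: x + y) = a *: amul z x + amul z y;
  amulA : forall x y z, amul x (amul y z) = amul (amul x y) z;
  amul1l : forall x, amul aone x = x;
  amul1r : forall x, amul x aone = x
}.

Definition aunit n (A : algebra n) (s : 'cV[RR]_n) : Prop :=
  exists t, amul A s t = aone A /\ amul A t s = aone A.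

(* the inverse s^{-1} of a unit s (junk value 0 on non-units) *)
Definition ainv n (A : algebra n) (s : 'cV[RR]_n) : 'cV[RR]_n :=
  xget 0 [set t | amul A s t = aone A /\ amul A t s = aone A].

Definition evec n (i : 'I_n) : 'cV[RR]_n := delta_mx i ord0.

(* j-th coefficient of the 1-form (s^{-1})^T L ds *)
Definition oneform n (A : algebra n) (L : 'M[RR]_n) (j : 'I_n)
  (s : 'cV[RR]_n) : RR^o := (((ainv A s)^T *m L) ord0 j).

(* L is an uncurling metric: symmetric, and the 1-form (s^{-1})^T L ds is
   closed (d = 0, i.e. d_i w_j = d_j w_i) on an open ball centred at 1_A
   consisting only of units. *)
Definition uncurling n (A : algebra n) (L : 'M[RR]_n) : Prop :=
  L^T = L /\
  exists r : RR, 0 < r /\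
    (forall s, ball (aone A) r s -> aunit A s) /\
    (forall s, ball (aone A) r s -> forall i j : 'I_n,
       'D_(evec i) (oneform A L j) s = 'D_(evec j) (oneform A L i) s).

Definition antirotor n (A : algebra n) : set 'M[RR]_n := [set L | uncurling A L].

Definition epimorphism n1 n2 (A1 : algebra n1) (A2 : algebra n2)
  (k : 'M[RR]_(n2, n1)) : Prop :=
  (forall x y, k *m amul A1 x y = amul A2 (k *m x) (k *m y)) /\
  k *m aone A1 = aone A2 /\
  (forall y : 'cV[RR]_n2, exists x : 'cV[RR]_n1, k *m x = y).

Definition Pmorphism n n' (P : set 'M[RR]_n) (P' : set 'M[RR]_n')
  (w : 'M[RR]_(n, n')) : Prop :=
  (w *m w^T) \in unitmx /\ (forall L, P L -> P' (w^T *m L *m w)).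

(* Main.v *)
Require Import Defs.
From mathcomp Require Import all_boot all_order all_algebra.
From mathcomp Require Import all_classical all_reals all_analysis.
From mathcomp Require Import Rstruct Rstruct_topology.
Import Order.TTheory GRing.Theory Num.Theory.
Local Open Scope classical_set_scope.
Local Open Scope ring_scope.

Module Helpers.
Import numFieldNormedType.Exports.

Definition mxcvg {T} (F : set_system T) {m n} (X : T -> 'M[RR]_(m,n)) (X0 : 'M[RR]_(m,n)) :=
  forall i j, (fun x => X x i j) @ F --> X0 i j.

Section MxCvg.
Context {T : Type} (F : set_system T) {FF : Filter F}.

Lemma cvg_sumR (I : Type) (r : seq I) (P : pred I) (f : I -> T -> RR) (a : I -> RR) :
  (forall i, P i -> f i @ F --> a i) ->
  (fun x => \sum_(i <- r | P i) f i x) @ F --> \sum_(i <- r | P i) a i.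
Proof.
move=> H; apply: (@cvg_big RR I +%R 0 P) => //.
move=> z; exact: (@pseudometric_normed_Zmodule.add_continuous _ RR^o z).
Qed.

Lemma cvg_prodR (I : Type) (r : seq I) (P : pred I) (f : I -> T -> RR) (a : I -> RR) :
  (forall i, P i -> f i @ F --> a i) ->
  (fun x => \prod_(i <- r | P i) f i x) @ F --> \prod_(i <- r | P i) a i.
Proof.
move=> H; apply: (@cvg_big RR I *%R 1 P) => //.
exact: (@mul_continuous _).
Qed.

Lemma mxcvg_cst {m n} (A : 'M[RR]_(m,n)) : mxcvg F (fun _ : T => A) A.
Proof. by move=> i j; exact: cvg_cst. Qed.

Lemma mxcvg_mul {m n p} {X : T -> 'M[RR]_(m,n)} {Y : T -> 'M[RR]_(n,p)} {X0 Y0} :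
  mxcvg F X X0 -> mxcvg F Y Y0 -> mxcvg F (fun x => X x *m Y x) (X0 *m Y0).
Proof.
move=> HX HY i j; rewrite mxE.
under eq_cvg do rewrite mxE.
apply: cvg_sumR => l _; apply: cvgM; [exact: HX | exact: HY].
Qed.

Lemma mxcvg_tr {m n} {X : T -> 'M[RR]_(m,n)} {X0} :
  mxcvg F X X0 -> mxcvg F (fun x => (X x)^T) X0^T.
Proof. by move=> HX i j; rewrite mxE; under eq_cvg do rewrite mxE; exact: HX. Qed.

Lemma cvg_det {m} {X : T -> 'M[RR]_m} {X0} :
  mxcvg F X X0 -> (fun x => \det (X x)) @ F --> \det X0.
Proof.
move=> HX; rewrite /determinant.
apply: cvg_sumR => s _; apply: cvgM; first exact: cvg_cst.
by apply: cvg_prodR => i _; exact: HX.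
Qed.

Lemma mxcvg_adj {m} {X : T -> 'M[RR]_m} {X0} :
  mxcvg F X X0 -> mxcvg F (fun x => \adj (X x)) (\adj X0).
Proof.
move=> HX i j; rewrite mxE; under eq_cvg do rewrite mxE.
rewrite /cofactor; apply: cvgM; first exact: cvg_cst.
apply: cvg_det => a b; rewrite !mxE; under eq_cvg do rewrite !mxE.
exact: HX.
Qed.

Lemma mxcvg_inv {m} {X : T -> 'M[RR]_m} {X0} :
  mxcvg F X X0 -> X0 \in unitmx -> mxcvg F (fun x => invmx (X x)) (invmx X0).
Proof.
move=> HX U0 i j.
have Hd := cvg_det HX.
have d0 : \det X0 != 0 by rewrite -unitfE -unitmxE.
have Hn := @cvgr_neq0 _ RR^o _ F FF _ _ Hd d0.
apply: cvg_trans; first apply: (near_eq_cvg (f := fun x => (\det (X x))^-1 * \adj (X x) i j)).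
  near=> x.
  have Ux : X x \in unitmx by rewrite unitmxE unitfE; near: x; exact: Hn.
  by rewrite /invmx Ux !mxE.
rewrite /invmx U0 mxE.
apply: cvgM; first exact: cvgV.
exact: (mxcvg_adj HX).
Unshelve. all: by end_near.
Qed.

End MxCvg.

Lemma lin_mxE m p (f : 'cV[RR]_m -> 'cV[RR]_p) :
  (forall a x y, f (a *: x + y) = a *: f x + f y) ->
  forall x, f x = (\matrix_(i, j) f (evec j) i ord0) *m x.
Proof.
move=> Hf x.
have f0 : f 0 = 0.
  have h := Hf 1 0 0; rewrite scaler0 addr0 scale1r in h.
  by apply: (@addrI _ (f 0)); rewrite addr0 -h.
have fD : forall x y, f (x + y) = f x + f y.
  by move=> x1 y1; rewrite -[x1]scale1r Hf !scale1r.
have fZ : forall a x, f (a *: x) = a *: f x.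
  by move=> a x1; rewrite -[a *: x1]addr0 Hf f0 addr0.
have Hx : x = \sum_j x j ord0 *: evec j.
  apply/matrixP => i k; rewrite (ord1 k) summxE (bigD1 i) //= big1.
    by rewrite !mxE eqxx /= mulr1 addr0.
  by move=> j /negbTE ji; rewrite !mxE eq_sym ji mulr0.
rewrite {1}Hx (big_morph f fD f0).
apply/matrixP => i k; rewrite (ord1 k) !mxE summxE.
apply: eq_bigr => j _; by rewrite fZ !mxE mulrC.
Qed.

Lemma mx_ext m p (M N : 'M[RR]_(m, p)) : (forall y : 'cV[RR]_p, M *m y = N *m y) -> M = N.
Proof.
move=> H; apply/matrixP => i j.
have := congr1 (fun v : 'cV_m => v i ord0) (H (evec j)).
by rewrite /evec -!colE !mxE.
Qed.

Lemma evec_entry m p (M : 'M[RR]_(m, p)) i j : ((evec i)^T *m M) ord0 j = M i j.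
Proof. by rewrite /evec trmx_delta -rowE mxE. Qed.

Section Alg.
Context {n : nat} (A : algebra n).
Local Notation mul := (amul A).
Local Notation one := (aone A).

Lemma amul0r z : mul 0 z = 0.
Proof.
have h := amulDl A 1 0 0 z; rewrite scaler0 addr0 scale1r in h.
by apply: (@addrI _ (mul 0 z)); rewrite addr0 -h.
Qed.
Lemma amulr0 z : mul z 0 = 0.
Proof.
have h := amulDr A 1 0 0 z; rewrite scaler0 addr0 scale1r in h.
by apply: (@addrI _ (mul z 0)); rewrite addr0 -h.
Qed.
Lemma amulDl' x y z : mul (x + y) z = mul x z + mul y z.
Proof. by rewrite -[x]scale1r amulDl !scale1r. Qed.
Lemma amulDr' x y z : mul z (x + y) = mul z x + mul z y.
Proof. by rewrite -[x]scale1r amulDr !scale1r. Qed.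
Lemma amulZl a x z : mul (a *: x) z = a *: mul x z.
Proof. by rewrite -[a *: x]addr0 amulDl amul0r addr0. Qed.
Lemma amulZr a x z : mul z (a *: x) = a *: mul z x.
Proof. by rewrite -[a *: x]addr0 amulDr amulr0 addr0. Qed.
Lemma amulNl x z : mul (- x) z = - mul x z.
Proof. by rewrite -scaleN1r amulZl scaleN1r. Qed.
Lemma amulNr x z : mul z (- x) = - mul z x.
Proof. by rewrite -scaleN1r amulZr scaleN1r. Qed.
Lemma amulBl x y z : mul (x - y) z = mul x z - mul y z.
Proof. by rewrite amulDl' amulNl. Qed.
Lemma amulBr x y z : mul z (x - y) = mul z x - mul z y.
Proof. by rewrite amulDr' amulNr. Qed.

Definition Lm (x : 'cV[RR]_n) : 'M[RR]_n := \matrix_(i, j) (mul x (evec j)) i ord0.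

Lemma Lm_mul x y : Lm x *m y = mul x y.
Proof. by rewrite [RHS](@lin_mxE _ _ (mul x)) // => a u v; rewrite amulDr. Qed.

Lemma Lm_amul x y : Lm (mul x y) = Lm x *m Lm y.
Proof. by apply: mx_ext => z; rewrite -mulmxA !Lm_mul amulA. Qed.

Lemma Lm1 : Lm one = 1%:M.
Proof. by apply: mx_ext => z; rewrite Lm_mul amul1l mul1mx. Qed.

Lemma ainvP s : aunit A s -> mul s (ainv A s) = one /\ mul (ainv A s) s = one.
Proof.
move=> H; exact: (@xgetPex _ 0 [set t | mul s t = one /\ mul t s = one] H).
Qed.

Lemma ainv_uniq s t : aunit A s -> mul s t = one -> ainv A s = t.
Proof.
move=> /ainvP [H1 H2] H.
by rewrite -[t](amul1l A) -H2 -amulA H amul1r.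
Qed.

Lemma unit_Lm s : aunit A s -> Lm s \in unitmx.
Proof.
move=> /ainvP [H1 _].
by have [] := @mulmx1_unit _ _ (Lm s) (Lm (ainv A s)); rewrite // -Lm_amul H1 Lm1.
Qed.

Lemma Lm_unit s : Lm s \in unitmx -> aunit A s.
Proof.
move=> U; exists (invmx (Lm s) *m one).
have H1 : mul s (invmx (Lm s) *m one) = one by rewrite -Lm_mul mulKVmx.
split => //.
rewrite -(mulKmx U (mul _ s)) Lm_mul amulA H1 amul1l.
by rewrite -[X in invmx _ *m X](amul1r A) -Lm_mul mulKmx.
Qed.

Lemma Lm_ainv s : aunit A s -> Lm (ainv A s) = invmx (Lm s).
Proof.
move=> U; have [H1 _] := @ainvP s U.
rewrite -[RHS]mulmx1 -Lm1 -H1 Lm_amul mulKmx //; exact: (@unit_Lm s U).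
Qed.

Lemma ainv_diff x s : aunit A x -> aunit A s ->
  ainv A x - ainv A s = mul (ainv A x) (mul (s - x) (ainv A s)).
Proof.
move=> /ainvP [Hx1 Hx2] /ainvP [Hs1 Hs2].
by rewrite amulBl amulBr Hs1 amul1r amulA Hx2 amul1l.
Qed.

Lemma lm_entry_lin j : forall x, mul x (evec j) = (\matrix_(i, l) mul (evec l) (evec j) i ord0) *m x.
Proof. by apply: lin_mxE => a u v; rewrite amulDl. Qed.

Lemma unit_near : \forall s \near one, aunit A s.
Proof.
have HL : mxcvg (nbhs one) Lm (Lm one).
  move=> i j.
  have E : (fun x => Lm x i j) = (fun x => ((\matrix_(i, l) mul (evec l) (evec j) i ord0) *m x) i ord0).
    by apply/funext => x; rewrite mxE lm_entry_lin.
  rewrite E [Lm one i j]mxE lm_entry_lin.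
  have HY : mxcvg (nbhs one) (fun x : 'cV[RR]_n => x) one.
    move=> a b; exact: (@coord_continuous _ n 1 a b one).
  exact: (mxcvg_mul _ (mxcvg_cst _ _) HY i ord0).
have Hd := @cvg_det _ (nbhs one) (nbhs_filter one) _ _ _ HL.
rewrite Lm1 det1 in Hd.
have Hn := @cvgr_neq0 _ RR^o _ _ _ _ _ Hd (oner_neq0 _).
near=> s; apply: Lm_unit; rewrite unitmxE unitfE; near: s; exact: Hn.
Unshelve. all: by end_near.
Qed.

Lemma derive_oneform L j s v : aunit A s ->
  'D_v (oneform A L j) s = - (((mul (ainv A s) (mul v (ainv A s)))^T *m L) ord0 j).
Proof.
move=> Us.
set u := mul v (ainv A s).
pose G := fun h : RR => - (((invmx (Lm (h *: v + s)) *m u)^T *m L) ord0 j).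
have HL : mxcvg (nbhs (0:RR)) (fun h => Lm (h *: v + s)) (Lm s).
  move=> i l.
  have E : (fun h : RR => Lm (h *: v + s) i l) = (fun h => h * mul v (evec l) i ord0 + mul s (evec l) i ord0).
    by apply/funext => h; rewrite !mxE amulDl !mxE.
  rewrite E [Lm s i l]mxE.
  have H1 : (fun h : RR => h) @ nbhs (0:RR) --> (0:RR) by exact: cvg_id.
  have := @cvgD _ RR^o _ (nbhs (0:RR)) _ _ _ _ _ (@cvgM _ _ (nbhs (0:RR)) _ _ (fun _ => mul v (evec l) i ord0) _ _ H1 (cvg_cst _)) (cvg_cst (mul s (evec l) i ord0)).
  rewrite mul0r add0r => H; apply: H; exact: nbhs_filter.
have UL : Lm s \in unitmx by exact: unit_Lm.
have HG : G @ nbhs (0:RR) --> - (((mul (ainv A s) u)^T *m L) ord0 j).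
  pose proof (mxcvg_mul (nbhs (0:RR)) (mxcvg_tr (nbhs (0:RR)) (mxcvg_mul (nbhs (0:RR)) (mxcvg_inv (nbhs (0:RR)) HL UL) (mxcvg_cst (nbhs (0:RR)) u))) (mxcvg_cst (nbhs (0:RR)) L) ord0 j) as H.
  rewrite -Lm_ainv // Lm_mul in H.
  exact: (@cvgN _ RR^o _ _ _ _ _ H).
apply: cvg_lim => //.
have HG' : G @ (0:RR)^' --> - (((mul (ainv A s) u)^T *m L) ord0 j).
  exact: (@cvg_within_filter _ _ G (nbhs (0:RR)) _ _ (fun y => y != 0) HG).
apply: cvg_trans; last exact: HG'.
apply: near_eq_cvg.
pose proof (cvg_det (nbhs (0:RR)) HL) as Hd.
have d0 : \det (Lm s) != 0 by rewrite -unitfE -unitmxE.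
pose proof (@cvgr_neq0 _ RR^o _ _ _ _ _ Hd d0) as Hn.
near=> h.
have h0 : h != 0 by near: h; exact: nbhs_dnbhs_neq.
have Ux : Lm (h *: v + s) \in unitmx.
  rewrite unitmxE unitfE; near: h; apply: cvg_within; exact: Hn.
rewrite /G /oneform /= /shift /=.
have Ux' : aunit A (h *: v + s) := @Lm_unit _ Ux.
have K : ainv A (h *: v + s) - ainv A s = (-h) *: (invmx (Lm (h *: v + s)) *m u).
  rewrite ainv_diff // (_ : s - (h *: v + s) = (-h) *: v); last first.
    by rewrite opprD addrCA subrr addr0 scaleNr.
  by rewrite amulZl amulZr -Lm_mul (@Lm_ainv _ Ux').
have E : forall w : 'cV[RR]_n, (w^T *m L) ord0 j = \sum_l w l ord0 * L l j.
  by move=> w; rewrite mxE; apply: eq_bigr => l _; rewrite mxE.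
rewrite !E -sumrB.
have K' : forall l, ainv A (h *: v + s) l ord0 - ainv A s l ord0 = (-h) * (invmx (Lm (h *: v + s)) *m u) l ord0.
  by move=> l; have := congr1 (fun M : 'cV[RR]_n => M l ord0) K; rewrite !mxE.
rewrite [in RHS](eq_bigr (fun l => (-h) * ((invmx (Lm (h *: v + s)) *m u) l ord0 * L l j))); last first.
  by move=> l _; rewrite -mulrBl K' mulrA.
rewrite -mulr_sumr.
rewrite /GRing.scale /= mulrA mulrN mulVf // mulN1r.
Unshelve. all: by end_near.
Qed.

End Alg.

Lemma mxcvg_cvg {T} (F : set_system T) {FF : Filter F} m p (X : T -> 'M[RR]_(m,p)) X0 :
  mxcvg F X X0 -> X @ F --> X0.
Proof.
move=> HX; apply/cvgrPdist_le => /= e e0.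
near=> x.
rewrite [leLHS]/Num.Def.normr/= mx_normrE (bigmax_le _ (ltW e0))//= => -[i j] _.
rewrite !mxE/=.
move: i j; near: x; apply: filter_forall => /= i; apply: filter_forall => j.
exact: ((@cvgrPdist_le _ RR^o _ F FF _ _).1 (HX i j) e e0).
Unshelve. all: by end_near. Qed.
Lemma mxcvg_id m p (a : 'M[RR]_(m,p)) : mxcvg (nbhs a) (fun x => x) a.
Proof. by move=> i j; exact: (@coord_continuous _ m p i j a). Qed.

Lemma entry_evec m p q (M : 'M[RR]_(m,p)) (N : 'M[RR]_(m,q)) i j :
  ((M *m evec i)^T *m N) ord0 j = (M^T *m N) i j.
Proof. by rewrite trmx_mul -mulmxA evec_entry. Qed.

Section Epi.
Context {n1 n2 : nat} (A1 : algebra n1) (A2 : algebra n2) (k : 'M[RR]_(n2, n1)).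
Hypothesis Hk : epimorphism A1 A2 k.

Lemma epi_unit s : aunit A1 s -> aunit A2 (k *m s) /\ ainv A2 (k *m s) = k *m ainv A1 s.
Proof.
have [Hm [H1 _]] := Hk.
move=> Us; have [a b] := ainvP _ _ Us.
have U2 : aunit A2 (k *m s).
  by exists (k *m ainv A1 s); rewrite -!Hm a b H1.
split => //; apply: (ainv_uniq _ _ _ U2); by rewrite -Hm a H1.
Qed.

Lemma kkT_unit : (k *m k^T) \in unitmx.
Proof.
have [_ [_ Hs]] := Hk.
rewrite -row_free_unit; apply: inj_row_free => x Hx.
have Hxk : x *m k = 0.
  have H0 : (x *m k) *m (x *m k)^T = 0.
    by rewrite trmx_mul !mulmxA -[x *m k *m k^T]mulmxA Hx mul0mx.
  have := congr1 (fun M : 'M[RR]_1 => M ord0 ord0) H0; rewrite !mxE => Hsum.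
  have H : forall i, (x *m k) ord0 i * (x *m k)^T i ord0 = 0.
    move=> i; apply: (psumr_eq0P _ Hsum) => // l _; rewrite [X in _ * X]mxE -expr2; exact: sqr_ge0.
  apply/matrixP => a b; rewrite (ord1 a) [RHS]mxE.
  have := H b; rewrite [X in _ * X]mxE => /eqP; rewrite mulf_eq0 orbb => /eqP ->.
  by [].
apply/matrixP => a j; rewrite (ord1 a) [RHS]mxE.
have [z Hz] := Hs (evec j).
have E0 : x *m (k *m z) = 0 by rewrite mulmxA Hxk mul0mx.
rewrite Hz /evec -colE in E0.
by have := congr1 (fun M : 'M[RR]_(1,1) => M ord0 ord0) E0; rewrite !mxE.
Qed.

Lemma pull_uncurl L : uncurling A2 L -> uncurling A1 (k^T *m L *m k).
Proof.
move=> [LT [r [r0 [Hu Hd]]]].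
have [Hm [H1 Hs]] := Hk.
split; first by rewrite !trmx_mul trmxK LT mulmxA.
have Hc : (fun s => k *m s) @ nbhs (aone A1) --> aone A2.
  rewrite -H1; apply: mxcvg_cvg => i j.
  pose proof (mxcvg_mul (nbhs (aone A1)) (mxcvg_cst (nbhs (aone A1)) k) (mxcvg_id _ _ (aone A1)) i j) as H.
  exact: H.
have Hb : \forall s \near aone A1, ball (aone A2) r (k *m s).
  exact: Hc (ball (aone A2) r) (nbhsx_ballx _ _ r0).
have Hu1 := unit_near A1.
have : \forall s \near aone A1, aunit A1 s /\ ball (aone A2) r (k *m s).
  by near=> s; split; near: s.
move=> /nbhs_ballP [e e0 He].
exists e; split => //; split.
  by move=> s /He [].
move=> s /He [Us Bs] i j.
have [Uks Eks] := epi_unit _ Us.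
have Hd' := Hd _ Bs.
rewrite !(derive_oneform _ _ _ _ _ Us).
congr (- _).
set b := ainv A1 s.
set t := k *m b.
pose P u := amul A2 t (amul A2 u t).
pose Pm := \matrix_(a, l) (P (evec l)) a ord0.
have PE : forall u, P u = Pm *m u.
  apply: lin_mxE => a u w; by rewrite /P amulDl amulDr.
pose S := Pm^T *m L.
have Lh : forall a c, ((amul A1 b (amul A1 (evec a) b))^T *m (k^T *m L *m k)) ord0 c
    = (k^T *m S *m k) a c.
  move=> a c.
  have -> : (amul A1 b (amul A1 (evec a) b))^T *m (k^T *m L *m k)
      = ((k *m (amul A1 b (amul A1 (evec a) b)))^T *m L) *m k.
    by rewrite trmx_mul !mulmxA.
  rewrite !Hm -/t -/(P (k *m evec a)) PE mulmxA -mulmxA entry_evec.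
  by rewrite trmx_mul !mulmxA.
have ST : S^T = S.
  apply/matrixP => l m; rewrite mxE.
  have := Hd' l m; rewrite !(derive_oneform _ _ _ _ _ Uks) Eks -/t.
  rewrite -/(P (evec l)) -/(P (evec m)) !PE !entry_evec => /eqP.
  by rewrite eqr_opp => /eqP.
have Sym0 : forall M : 'M[RR]_n2, M^T = M -> (k^T *m M *m k)^T = k^T *m M *m k.
  by move=> M MT; rewrite !trmx_mul trmxK MT mulmxA.
have Sym := Sym0 S ST.
by rewrite !Lh -{1}Sym mxE.
Unshelve. all: by end_near.
Qed.

End Epi.

End Helpers.
Import Helpers.

Theorem theorem6p1 :
  (* F(k) = k^T[.]k is a morphism u_{A2} -> u_{A1} of P, for every epimorphism k *)
  (forall (n1 n2 : nat) (A1 : algebra n1) (A2 : algebra n2) (k : 'M[RR]_(n2, n1)),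
     epimorphism A1 A2 k ->
     (forall L, antirotor A2 L -> antirotor A1 (k^T *m L *m k)) /\
     (k *m k^T) \in unitmx /\
     Pmorphism (antirotor A2) (antirotor A1) k) /\
  (* F preserves identities *)
  (forall (n : nat) (A : algebra n),
     epimorphism A A 1%:M /\
     forall L, antirotor A L -> (1%:M : 'M[RR]_n)^T *m L *m 1%:M = L) /\
  (* F is contravariant: F(k2 o k1) = F(k1) o F(k2) *)
  (forall (n1 n2 n3 : nat) (A1 : algebra n1) (A2 : algebra n2) (A3 : algebra n3)
          (k1 : 'M[RR]_(n2, n1)) (k2 : 'M[RR]_(n3, n2)),
     epimorphism A1 A2 k1 -> epimorphism A2 A3 k2 ->
     epimorphism A1 A3 (k2 *m k1) /\
     forall L, antirotor A3 L ->
       (k2 *m k1)^T *m L *m (k2 *m k1) = k1^T *m (k2^T *m L *m k2) *m k1).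
Proof.
split.
  move=> n1 n2 A1 A2 k Hk.
  have H1 : forall L, antirotor A2 L -> antirotor A1 (k^T *m L *m k).
    by move=> L HL; exact: (pull_uncurl A1 A2 k Hk L HL).
  have H2 := kkT_unit A1 A2 k Hk.
  by split => //; split => //; split.
split.
  move=> n A; split; last by move=> L _; rewrite trmx1 mul1mx mulmx1.
  split; first by move=> x y; rewrite !mul1mx.
  split; first by rewrite mul1mx.
  by move=> y; exists y; rewrite mul1mx.
move=> n1 n2 n3 A1 A2 A3 k1 k2 [Hm1 [Ho1 Hs1]] [Hm2 [Ho2 Hs2]].
split; last by move=> L _; rewrite trmx_mul !mulmxA.
split; first by move=> x y; rewrite -!mulmxA Hm1 Hm2.
split; first by rewrite -mulmxA Ho1 Ho2.
move=> y; have [y2 <-] := Hs2 y; have [x <-] := Hs1 y2.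
by exists x; rewrite mulmxA.
Qed.
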